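(* Let $p>q>1$ be relatively prime integers and let $a\ge1$, $b\ge0$ be integers. If a sequence $\mathbf{x}=x_0x_1\cdots$ is $\frac pq$-automatic, then the sequence $(x_{an+b})_{n\ge0}$ is also $\frac pq$-automatic.
   Context: $A_p=\{0,\ldots,p-1\}$; for $w=w_\ell\cdots w_0\in A_p^*$, $\mathrm{val}_{\frac pq}(w)=\sum_{i=0}^{\ell}\frac{w_i}{q}(\frac pq)^i$; $\mathrm{rep}_{\frac pq}(n)$ is the unique word not starting with $0$ with value $n$ ($\mathrm{rep}_{\frac pq}(0)=\varepsilon$). A sequence $\mathbf{x}$ over a finite alphabet $B$ is $\frac pq$-automatic if there is a deterministic finite automaton with output $(Q,q_0,A_p,\delta,\tau:Q\to B)$ with $x_n=\tau(\delta(q_0,\mathrm{rep}_{\frac pq}(n)))$ for all $n\ge0$. *)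

(* Defs.v *)
From mathcomp Require Import all_boot all_algebra.
Set Implicit Arguments. Unset Strict Implicit. Unset Printing Implicit Defensive.
Import GRing.Theory Num.Theory.

(* Words over A_p are represented as [seq nat], written most significant
   digit first: the word w_l ... w_0 is [:: w_l; ...; w_0]. *)

(* val_{p/q}(w) = sum_i (w_i / q) (p/q)^i, computed by Horner's scheme. *)
Definition val_pq (p q : nat) (w : seq nat) : rat :=
  (foldl (fun acc d => (p%:R / q%:R) * acc + d%:R / q%:R) 0 w)%R.

(* rep_{p/q}(n): rep(0) = eps, and for n > 0, writing q*n = p*m + a with
   0 <= a < p, rep(n) = rep(m) a  (m < n since p > q).  Fuel n suffices. *)
Fixpoint rep_aux (p q fuel n : nat) : seq nat :=
  match fuel with
  | 0 => [::]
  | fuel'.+1 =>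
      if n == 0 then [::]
      else rcons (rep_aux p q fuel' ((q * n) %/ p)) ((q * n) %% p)
  end.

Definition rep_pq (p q n : nat) : seq nat := rep_aux p q n n.

(* A deterministic finite automaton with output reading A_p (digits are nats;
   only digits < p ever occur in representations). *)
Record DFAO (B : Type) := {
  dfa_state : finType;
  dfa_init : dfa_state;
  dfa_delta : dfa_state -> nat -> dfa_state;
  dfa_out : dfa_state -> B
}.

Definition dfa_run (B : Type) (M : DFAO B) (w : seq nat) : dfa_state M :=
  foldl (@dfa_delta B M) (@dfa_init B M) w.

Definition pq_automatic (p q : nat) (B : finType) (x : nat -> B) : Prop :=
  exists M : DFAO B, forall n, x n = @dfa_out B M (dfa_run M (rep_pq p q n)).

(* Main.v *)
Require Import Defs.
From mathcomp Require Import all_boot all_algebra.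
From mathcomp Require Import zify.

Lemma rep_aux_fuel p q (hqp : q < p) : forall f1 f2 n, n <= f1 -> n <= f2 ->
  rep_aux p q f1 n = rep_aux p q f2 n.
Proof.
have p0 : 0 < p by apply: leq_ltn_trans hqp.
elim=> [|f1 IH] f2 n h1 h2.
  by move: h1; rewrite leqn0 => /eqP ->; case: f2 h2.
case: f2 h2 => [|f2] h2.
  by move: h2; rewrite leqn0 => /eqP ->.
case: n h1 h2 => [|n] h1 h2 //=.
have H : q * n.+1 %/ p < n.+1 by rewrite ltn_divLR //; nia.
congr rcons; apply: IH; rewrite -ltnS; exact: leq_trans H _.
Qed.

Lemma rep_unfold p q (hqp : q < p) n : 0 < n ->
  rep_pq p q n = rcons (rep_pq p q (q * n %/ p)) (q * n %% p).
Proof.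
move=> n0; rewrite /rep_pq; case: n n0 => // n _ /=.
congr rcons; apply: rep_aux_fuel => //.
have : q * n.+1 %/ p < n.+1.
  by rewrite ltn_divLR; nia.
by [].
Qed.

Arguments rep_unfold {p q} hqp {n}.

Theorem mainTheorem15 (p q : nat) (hqp : q < p) (hq : 1 < q) (hcop : coprime p q)
  (a b : nat) (ha : 1 <= a) (B : finType) (x : nat -> B) :
  pq_automatic p q x -> pq_automatic p q (fun n => x (a * n + b)).
Proof.
case=> M HM.
pose K := a * p + b.
pose S := {ffun 'I_K.+1 -> dfa_state M}.
pose init : S := [ffun c : 'I_K.+1 => dfa_run M (rep_pq p q c)].
pose del (f : S) (d : nat) : S :=
  [ffun c : 'I_K.+1 => dfa_delta (f (inord ((a * d + c * q) %/ p)))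
                                  ((a * d + c * q) %% p)].
pose out (f : S) : B := dfa_out (f (inord b)).
pose M' := @Build_DFAO B S init del out.
have p0 : 0 < p by apply: leq_ltn_trans hqp.
have inv : forall n (c : 'I_K.+1),
    dfa_run M' (rep_pq p q n) c = dfa_run M (rep_pq p q (a * n + c)).
  elim/ltn_ind=> n IH c.
  case: (posnP n) => [->|n0].
    by rewrite /dfa_run /rep_pq /= ffunE muln0.
  rewrite (rep_unfold hqp n0) /dfa_run foldl_rcons -/(dfa_run _ _) /= ffunE.
  set m := q * n %/ p; set d := q * n %% p.
  have dp : d < p by rewrite /d ltn_pmod.
  have hb : (a * d + c * q) %/ p < K.+1.
    rewrite ltn_divLR //.
    have := ltn_ord c; rewrite /K => hc. nia.
  have mn : m < n by rewrite /m ltn_divLR //; nia.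
  rewrite IH // inordK //.
  rewrite (rep_unfold hqp (n := a * n + c)); last by nia.
  have e : q * (a * n + c) = (a * m) * p + (a * d + c * q).
    have := divn_eq (q * n) p; rewrite -/m -/d => E.
    rewrite mulnDr mulnA (mulnC q a) -mulnA E; lia.
  rewrite /dfa_run foldl_rcons e divnMDl // modnMDl.
  done.
exists M' => n.
rewrite HM.
have bK : b < K.+1 by rewrite /K; nia.
change (dfa_out (dfa_run M (rep_pq p q (a * n + b))) = dfa_out (dfa_run M' (rep_pq p q n) (inord b))).
by rewrite (inv n (inord b)) inordK.
Qed.
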